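(* Let $F\in\mathrm{GL}^+(2)$ have singular values $\lambda_1=\lambda_2=c$, and let $H\in\mathbb{R}^{2\times2}$. Define $\lambda_{\max}(t)=\lambda_{\max}(F+tH)$ and $\lambda_{\min}(t)=\lambda_{\min}(F+tH)$, the larger and smaller singular values of $F+tH$. Then the mappings $t\mapsto\lambda_{\max}(t)$ and $t\mapsto\lambda_{\min}(t)$ are both left-differentiable and right-differentiable in a neighbourhood of $t=0$, and $$\partial^-\lambda_{\max}(0)=\partial^+\lambda_{\min}(0)\leq\partial^-\lambda_{\min}(0)=\partial^+\lambda_{\max}(0).$$
   Context: $\mathrm{GL}^+(2)$ is the group of real invertible $2\times2$ matrices with positive determinant. For a real function $f$, the one-sided derivatives are $\partial^-f(t)=\lim_{h\uparrow0}\frac{f(t+h)-f(t)}{h}$ and $\partial^+f(t)=\lim_{h\downarrow0}\frac{f(t+h)-f(t)}{h}$. *)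

(* Defs.v *)
From HB Require Import structures.
From mathcomp Require Import all_boot all_order all_algebra.
From mathcomp Require Import all_classical all_reals all_analysis.
Set Implicit Arguments. Unset Strict Implicit. Unset Printing Implicit Defensive.
Import Order.TTheory GRing.Theory Num.Theory.
Import numFieldNormedType.Exports.
Local Open Scope ring_scope.
Local Open Scope classical_set_scope.

(* For a 2x2
   matrix C the eigenvalues are the roots of x^2 - tr(C) x + det(C), i.e.
   (tr C +- sqrt(tr(C)^2 - 4 det C)) / 2. *)
Section SV.
Variable R : realType.

Definition gram (F : 'M[R]_2) : 'M[R]_2 := F^T *m F.

Definition eig_max_sym2 (C : 'M[R]_2) : R :=
  (\tr C + Num.sqrt (\tr C ^+ 2 - 4%:R * \det C)) / 2%:R.
Definition eig_min_sym2 (C : 'M[R]_2) : R :=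
  (\tr C - Num.sqrt (\tr C ^+ 2 - 4%:R * \det C)) / 2%:R.

Definition sv_max (F : 'M[R]_2) : R := Num.sqrt (eig_max_sym2 (gram F)).
Definition sv_min (F : 'M[R]_2) : R := Num.sqrt (eig_min_sym2 (gram F)).

Definition left_deriv (f : R -> R) (t d : R) : Prop :=
  (fun h : R => (f (t + h) - f t) / h) @ 0^'- --> d.
Definition right_deriv (f : R -> R) (t d : R) : Prop :=
  (fun h : R => (f (t + h) - f t) / h) @ 0^'+ --> d.

Definition left_differentiable (f : R -> R) (t : R) : Prop :=
  exists d, left_deriv f t d.
Definition right_differentiable (f : R -> R) (t : R) : Prop :=
  exists d, right_deriv f t d.
End SV.

(* Main.v *)
Require Import Defs.
From HB Require Import structures.
From mathcomp Require Import all_boot all_order all_algebra.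
From mathcomp Require Import all_classical all_reals all_analysis.
From mathcomp Require Import ring lra.
Import Order.TTheory GRing.Theory Num.Theory.
Import numFieldNormedType.Exports.
Local Open Scope ring_scope.
Local Open Scope classical_set_scope.

Lemma det22 (R : comNzRingType) (A : 'M[R]_2) : \det A = A 0 0 * A 1 1 - A 0 1 * A 1 0.
Proof.
rewrite (expand_det_row _ 0) !big_ord_recl big_ord0 /cofactor !det_mx11 !mxE /=.
have E1 : lift (0:'I_2) (0:'I_1) = 1 by exact/val_inj.
have E2 : lift (1:'I_2) (0:'I_1) = 0 by exact/val_inj.
rewrite E1 E2 /bump /= expr0 expr1 !mul1r addr0 mulN1r mulrN; done.
Qed.
Lemma tr22 (R : comNzRingType) (A : 'M[R]_2) : \tr A = A 0 0 + A 1 1.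
Proof. rewrite /mxtrace !big_ord_recl big_ord0 /=.
have E1 : lift (0:'I_2) (0:'I_1) = 1 by exact/val_inj.
by rewrite E1 addr0. Qed.

Section S.
Variable R : realType.
Definition PP (G : 'M[R]_2) := (G 0 0 + G 1 1) ^+ 2 + (G 1 0 - G 0 1) ^+ 2.
Definition QQ (G : 'M[R]_2) := (G 0 0 - G 1 1) ^+ 2 + (G 0 1 + G 1 0) ^+ 2.

Lemma gram_entries (G : 'M[R]_2) i j : gram G i j = G 0 i * G 0 j + G 1 j * G 1 i.
Proof.
rewrite /gram !mxE !big_ord_recl big_ord0 !mxE /=.
have E1 : lift (0:'I_2) (0:'I_1) = 1 by exact/val_inj.
by rewrite E1 addr0 [G 1 j * _]mulrC.
Qed.

Lemma sv_formula (G : 'M[R]_2) :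
  sv_max G = (Num.sqrt (PP G) + Num.sqrt (QQ G)) / 2 /\
  sv_min G = `|Num.sqrt (PP G) - Num.sqrt (QQ G)| / 2.
Proof.
have P0 : 0 <= PP G by rewrite /PP addr_ge0 // sqr_ge0.
have Q0 : 0 <= QQ G by rewrite /QQ addr_ge0 // sqr_ge0.
set p := Num.sqrt (PP G); set q := Num.sqrt (QQ G).
have p0 : 0 <= p by apply: sqrtr_ge0.
have q0 : 0 <= q by apply: sqrtr_ge0.
have pp : p ^+ 2 = PP G by rewrite sqr_sqrtr.
have qq : q ^+ 2 = QQ G by rewrite sqr_sqrtr.
have Etr : \tr (gram G) = (p ^+ 2 + q ^+ 2) / 2.
  rewrite tr22 !gram_entries pp qq /PP /QQ; by field; rewrite ?pnatr_eq0.
have Edet : \det (gram G) = ((p ^+ 2 - q ^+ 2) / 4%:R) ^+ 2.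
  rewrite det22 !gram_entries pp qq /PP /QQ; by field; rewrite ?pnatr_eq0.
have Ed : \tr (gram G) ^+ 2 - 4%:R * \det (gram G) = (p * q) ^+ 2.
  rewrite Etr Edet; by field; rewrite ?pnatr_eq0.
rewrite /sv_max /sv_min /eig_max_sym2 /eig_min_sym2 Ed sqrtr_sqr Etr.
rewrite ger0_norm ?mulr_ge0 //.
have -> : ((p ^+ 2 + q ^+ 2) / 2 + p * q) / 2%:R = ((p + q) / 2) ^+ 2 by field; rewrite ?pnatr_eq0.
have -> : ((p ^+ 2 + q ^+ 2) / 2 - p * q) / 2%:R = ((p - q) / 2) ^+ 2 by field; rewrite ?pnatr_eq0.
rewrite !sqrtr_sqr ger0_norm ?divr_ge0 ?addr_ge0 //; split => //.
by rewrite normrM [`|2^-1|]ger0_norm.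
Qed.
End S.

Section S2.
Variable R : realType.
Definition Pf (a b c s : R) := a * s ^+ 2 + b * s + c.

Lemma Pf_cvg a b c t : (fun h => Pf a b c (t + h)) @ (nbhs (0:R)) --> Pf a b c t.
Proof.
have Hs : (fun h : R => t + h) @ (nbhs (0:R)) --> t.
  rewrite -[X in _ --> X]addr0; apply: cvgD; [exact: cvg_cst | exact: cvg_id].
rewrite /Pf; apply: cvgD; [apply: cvgD|exact: cvg_cst].
- apply: cvgM; first exact: cvg_cst.
  rewrite expr2; exact: cvgM.
- apply: cvgM; first exact: cvg_cst. exact: Hs.
Qed.

Lemma sqrtPf_cvg a b c t : (fun h => Num.sqrt (Pf a b c (t + h))) @ (nbhs (0:R)) --> Num.sqrt (Pf a b c t).
Proof.
apply: continuous_cvg; [exact: sqrt_continuous | exact: Pf_cvg].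
Qed.

Lemma dq_eq a b c t h : h != 0 -> 0 < Pf a b c t -> 0 <= Pf a b c (t + h) ->
  (Num.sqrt (Pf a b c (t + h)) - Num.sqrt (Pf a b c t)) / h =
  (2 * a * t + b + a * h) / (Num.sqrt (Pf a b c (t + h)) + Num.sqrt (Pf a b c t)).
Proof.
move=> h0 P0 Pge.
have s0 : 0 < Num.sqrt (Pf a b c t) by rewrite sqrtr_gt0.
have s1 : 0 <= Num.sqrt (Pf a b c (t + h)) by apply: sqrtr_ge0.
have D : Num.sqrt (Pf a b c (t + h)) + Num.sqrt (Pf a b c t) != 0.
  by rewrite gt_eqF // ltr_wpDl.
have E : Pf a b c (t + h) - Pf a b c t = h * (2 * a * t + b + a * h).
  by rewrite /Pf; ring.
apply/eqP; rewrite eqr_div //; apply/eqP.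
have Ex := sqr_sqrtr Pge; have Ey := sqr_sqrtr (ltW P0).
move: E Ex Ey; set x := Num.sqrt _; set y := Num.sqrt _ => E Ex Ey.
rewrite -Ex -Ey in E.
rewrite [LHS](_ : _ = x ^+ 2 - y ^+ 2); last by ring.
by rewrite E; ring.
Qed.


Lemma dqp_cvg a b c t (F : set_system R) {FF : Filter F} :
  F `=>` nbhs (0:R) -> (\forall h \near F, h != 0) ->
  0 < Pf a b c t -> (forall s, 0 <= Pf a b c s) ->
  (fun h => (Num.sqrt (Pf a b c (t + h)) - Num.sqrt (Pf a b c t)) / h) @ F -->
  (2 * a * t + b) / (2 * Num.sqrt (Pf a b c t)).
Proof.
move=> F0 Fn P0 Pge.
have s0 : 0 < Num.sqrt (Pf a b c t) by rewrite sqrtr_gt0.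
pose g := fun h => (2 * a * t + b + a * h) /
   (Num.sqrt (Pf a b c (t + h)) + Num.sqrt (Pf a b c t)).
apply: (@cvg_trans _ (g @ F)).
  apply: near_eq_cvg; near=> h; rewrite /g dq_eq //; first by near: h.
have -> : (2 * a * t + b) / (2 * Num.sqrt (Pf a b c t)) =
  (2 * a * t + b + a * 0) * (Num.sqrt (Pf a b c t) + Num.sqrt (Pf a b c t))^-1.
  by rewrite mulr0 addr0; congr (_ / _); rewrite (mulr_natl _ 2) mulr2n.
apply: (@cvg_trans _ (g @ nbhs (0:R))); first exact: cvg_app.
rewrite /g; apply: cvgM.
  apply: cvgD; first exact: cvg_cst.
  apply: cvgM; [exact: cvg_cst | exact: cvg_id].
apply: cvgV; first by rewrite gt_eqF // addr_gt0.
apply: cvgD; [exact: sqrtPf_cvg | exact: cvg_cst].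
Unshelve. all: by end_near.
Qed.

Lemma dqabs_right (t : R) :
  (fun h => (`|t + h| - `|t|) / h) @ 0^'+ --> (if 0 <= t then 1 else -1 : R).
Proof.
case: ifP => t0.
  apply: (@cvg_trans _ ((fun=> (1:R)) @ 0^'+)); last exact: cvg_cst.
  apply: near_eq_cvg; near=> h.
  have h0 : 0 < h by near: h; exact: nbhs_right_gt.
  apply/esym; rewrite (ger0_norm t0) ger0_norm; last by rewrite addr_ge0 // ltW.
  rewrite addrAC subrr add0r divff ?gt_eqF //.
have tn : t < 0 by rewrite ltNge t0.
apply: (@cvg_trans _ ((fun=> (-1:R)) @ 0^'+)); last exact: cvg_cst.
apply: near_eq_cvg; near=> h.
have h0 : 0 < h by near: h; exact: nbhs_right_gt.
have h1 : h < - t by near: h; apply: nbhs_right_lt; rewrite oppr_gt0.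
apply/esym; rewrite (ltr0_norm tn) ltr0_norm; last by rewrite -ltrBrDl sub0r.
rewrite (_ : -(t + h) - - t = - h); last by ring.
rewrite mulNr divff ?gt_eqF //.
Unshelve. all: by end_near.
Qed.

Lemma dqabs_left (t : R) :
  (fun h => (`|t + h| - `|t|) / h) @ 0^'- --> (if 0 < t then 1 else -1 : R).
Proof.
case: ifP => t0.
  apply: (@cvg_trans _ ((fun=> (1:R)) @ 0^'-)); last exact: cvg_cst.
  apply: near_eq_cvg; near=> h.
  have h0 : h < 0 by near: h; exact: nbhs_left_lt.
  have h1 : - t < h by near: h; apply: nbhs_left_gt; rewrite oppr_lt0.
  apply/esym; rewrite (gtr0_norm t0) gtr0_norm; last by rewrite -ltrBlDl sub0r.
  rewrite addrAC subrr add0r divff ?lt_eqF //.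
have tn : t <= 0 by rewrite leNgt t0.
apply: (@cvg_trans _ ((fun=> (-1:R)) @ 0^'-)); last exact: cvg_cst.
apply: near_eq_cvg; near=> h.
have h0 : h < 0 by near: h; exact: nbhs_left_lt.
apply/esym; rewrite (ler0_norm tn) ler0_norm; last by lra.
rewrite (_ : -(t + h) - - t = - h); last by ring.
rewrite mulNr divff ?lt_eqF //.
Unshelve. all: by end_near.
Qed.

Lemma derivF (a b c k e t sg : R) (lmax lmin : R -> R) (F : set_system R) {FF : Filter F} :
  F `=>` nbhs (0:R) -> (\forall h \near F, h != 0) ->
  (forall s, 0 <= Pf a b c s) -> 0 <= k ->
  (forall s, lmax s = (Num.sqrt (Pf a b c s) + `|s| * k) / 2) ->
  (forall s, lmin s = `|Num.sqrt (Pf a b c s) - `|s| * k| / 2) ->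
  (forall s, `|s| < e -> `|s| * k < Num.sqrt (Pf a b c s)) ->
  `|t| < e -> (\forall h \near F, `|t + h| < e) ->
  (fun h => (`|t + h| - `|t|) / h) @ F --> sg ->
  (fun h => (lmax (t + h) - lmax t) / h) @ F -->
     ((2 * a * t + b) / (2 * Num.sqrt (Pf a b c t)) + sg * k) / 2 /\
  (fun h => (lmin (t + h) - lmin t) / h) @ F -->
     ((2 * a * t + b) / (2 * Num.sqrt (Pf a b c t)) - sg * k) / 2.
Proof.
move=> F0 Fn Pge k0 Emax Emin Hgood te Fe Habs.
have Pt : 0 < Pf a b c t.
  have := Hgood t te; rewrite -sqrtr_gt0; apply: le_lt_trans.
  by rewrite mulr_ge0.
have Hp := @dqp_cvg a b c t F FF F0 Fn Pt Pge.
split.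
  have -> : (fun h => (lmax (t + h) - lmax t) / h) =
    (fun h => ((Num.sqrt (Pf a b c (t + h)) - Num.sqrt (Pf a b c t)) / h +
               (`|t + h| - `|t|) / h * k) * 2^-1).
    by apply: funext => h; rewrite !Emax; ring.
  apply: cvgM; last exact: cvg_cst.
  apply: cvgD; first exact: Hp.
  apply: cvgM; [exact: Habs | exact: cvg_cst].
pose g := (fun h => ((Num.sqrt (Pf a b c (t + h)) - Num.sqrt (Pf a b c t)) / h -
               (`|t + h| - `|t|) / h * k) * 2^-1).
apply: (@cvg_trans _ (g @ F)).
  apply: near_eq_cvg; near=> h.
  have Hh : `|t + h| < e by near: h.
  have N1 : `|Num.sqrt (Pf a b c (t + h)) - `|t + h| * k| =
            Num.sqrt (Pf a b c (t + h)) - `|t + h| * k.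
    by apply: ger0_norm; rewrite subr_ge0; apply: ltW; apply: Hgood.
  have N2 : `|Num.sqrt (Pf a b c t) - `|t| * k| = Num.sqrt (Pf a b c t) - `|t| * k.
    by apply: ger0_norm; rewrite subr_ge0; apply: ltW; apply: Hgood.
  by rewrite /g !Emin N1 N2; ring.
rewrite /g; apply: cvgM; last exact: cvg_cst.
apply: cvgB; first exact: Hp.
apply: cvgM; [exact: Habs | exact: cvg_cst].
Unshelve. all: by end_near.
Qed.

Lemma near_right_e (t e : R) : `|t| < e -> \forall h \near 0^'+, `|t + h| < e.
Proof.
move=> te; near=> h.
have h0 : 0 < h by near: h; exact: nbhs_right_gt.
have h1 : h < e - `|t| by near: h; apply: nbhs_right_lt; rewrite subr_gt0.
apply: (le_lt_trans (ler_normD _ _)); rewrite (gtr0_norm h0); lra.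
Unshelve. all: by end_near.
Qed.

Lemma near_left_e (t e : R) : `|t| < e -> \forall h \near 0^'-, `|t + h| < e.
Proof.
move=> te; near=> h.
have h0 : h < 0 by near: h; exact: nbhs_left_lt.
have h1 : - (e - `|t|) < h by near: h; apply: nbhs_left_gt; rewrite oppr_lt0 subr_gt0.
apply: (le_lt_trans (ler_normD _ _)); rewrite (ltr0_norm h0); lra.
Unshelve. all: by end_near.
Qed.

Lemma good_bound (a b c k : R) : 0 < c -> 0 <= k ->
  exists2 e : R, 0 < e & forall s, `|s| < e -> 0 < Pf a b c s - s ^+ 2 * k ^+ 2.
Proof.
move=> c0 k0.
set B := `|b|; set A := `|a - k ^+ 2|.
have B0 : 0 <= B by apply: normr_ge0.
have A0 : 0 <= A by apply: normr_ge0.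
have D0 : 0 < B + A + 1 by lra.
exists (Num.min 1 (c / (B + A + 1))).
  by rewrite lt_min ltr01 divr_gt0.
move=> s; rewrite lt_min => /andP[s1 s2].
move: s2; rewrite ltr_pdivlMr // => s2.
set u := `|s|.
have u0 : 0 <= u by apply: normr_ge0.
have Hb : - (B * u) <= b * s.
  by have := ler_norm (- (b * s)); rewrite normrN normrM -/B -/u; lra.
have Hs : s ^+ 2 = u ^+ 2 by rewrite /u real_normK // num_real.
have Ha : - (A * u ^+ 2) <= (a - k ^+ 2) * s ^+ 2.
  have := ler_norm (- ((a - k ^+ 2) * s ^+ 2)).
  by rewrite normrN normrM normrX -/u -/A; lra.
have Au : A * u ^+ 2 <= A * u.
  by rewrite expr2 mulrA ler_piMr // ?mulr_ge0 // ltW.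
have -> : Pf a b c s - s ^+ 2 * k ^+ 2 = c + b * s + (a - k ^+ 2) * s ^+ 2.
  by rewrite /Pf; ring.
move: s1 s2; rewrite -/u => s1 s2; clearbody u A B; nra.
Qed.

Lemma abstract_main (a b c k : R) (lmax lmin : R -> R) :
  0 < c -> 0 <= k -> (forall s, 0 <= Pf a b c s) ->
  (forall s, lmax s = (Num.sqrt (Pf a b c s) + `|s| * k) / 2) ->
  (forall s, lmin s = `|Num.sqrt (Pf a b c s) - `|s| * k| / 2) ->
  (exists2 e : R, 0 < e & forall t : R, `|t| < e ->
     [/\ left_differentiable lmax t, right_differentiable lmax t,
         left_differentiable lmin t & right_differentiable lmin t]) /\
  (exists dmaxL dmaxR dminL dminR : R,
     [/\ left_deriv lmax 0 dmaxL, right_deriv lmax 0 dmaxR,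
         left_deriv lmin 0 dminL, right_deriv lmin 0 dminR &
         [/\ dmaxL = dminR, dminR <= dminL & dminL = dmaxR]]).
Proof.
move=> c0 k0 Pge Emax Emin.
have [e e0 He] := @good_bound a b c k c0 k0.
have Hgood : forall s, `|s| < e -> `|s| * k < Num.sqrt (Pf a b c s).
  move=> s se; have := He s se.
  have Ps := Pge s.
  have x0 := sqrtr_ge0 (Pf a b c s).
  have xx := sqr_sqrtr Ps.
  have y0 : 0 <= `|s| * k by rewrite mulr_ge0.
  have Hs : s ^+ 2 = `|s| ^+ 2 by rewrite real_normK // num_real.
  move: x0 xx y0 Hs; set x := Num.sqrt _; set y := `|s| * k.
  rewrite /y; set u := `|s|; clearbody x u => x0 xx y0 Hs H.
  rewrite Hs -xx in H. nra.
split.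
  exists e => // t te.
  have [R1 R2] := derivF a b c k e t _ lmax lmin (0^'+) (cvg_within _) (nbhs_right_neq 0) Pge k0 Emax Emin Hgood te (near_right_e t e te) (dqabs_right t).
  have [L1 L2] := derivF a b c k e t _ lmax lmin (0^'-) (cvg_within _) (nbhs_left_neq 0) Pge k0 Emax Emin Hgood te (near_left_e t e te) (dqabs_left t).
  split; [by eexists; exact: L1|by eexists; exact: R1|by eexists; exact: L2|by eexists; exact: R2].
have e0' : `|0 : R| < e by rewrite normr0.
have [R1 R2] := derivF a b c k e 0 _ lmax lmin (0^'+) (cvg_within _) (nbhs_right_neq 0) Pge k0 Emax Emin Hgood e0' (near_right_e 0 e e0') (dqabs_right 0).
have [L1 L2] := derivF a b c k e 0 _ lmax lmin (0^'-) (cvg_within _) (nbhs_left_neq 0) Pge k0 Emax Emin Hgood e0' (near_left_e 0 e e0') (dqabs_left 0).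
move: R1 R2 L1 L2; rewrite ltxx lexx.
set pi := (2 * a * 0 + b) / _ => R1 R2 L1 L2.
exists ((pi + -1 * k) / 2), ((pi + 1 * k) / 2), ((pi - -1 * k) / 2), ((pi - 1 * k) / 2).
split => //; split; lra.
Qed.
End S2.

Local Close Scope classical_set_scope.

Theorem lemma3p8 (R : realType) (F H : 'M[R]_2) (c : R) :
  0 < \det F ->
  sv_max F = c -> sv_min F = c ->
  let lmax := fun t : R => sv_max (F + t *: H) in
  let lmin := fun t : R => sv_min (F + t *: H) in
  (exists2 e : R, 0 < e & forall t : R, `|t| < e ->
     [/\ left_differentiable lmax t, right_differentiable lmax t,
         left_differentiable lmin t & right_differentiable lmin t]) /\
  (exists dmaxL dmaxR dminL dminR : R,
     [/\ left_deriv lmax 0 dmaxL, right_deriv lmax 0 dmaxR,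
         left_deriv lmin 0 dminL, right_deriv lmin 0 dminR &
         [/\ dmaxL = dminR, dminR <= dminL & dminL = dmaxR]]).
Proof.
move=> detF hmax hmin lmax lmin.
have [fmax fmin] := @sv_formula R F.
have PQ : forall G : 'M[R]_2, PP R G - QQ R G = 4%:R * \det G.
  by move=> G; rewrite det22 /PP /QQ; ring.
have P0 : forall G : 'M[R]_2, 0 <= PP R G by move=> G; rewrite /PP addr_ge0 // sqr_ge0.
have Q0 : forall G : 'M[R]_2, 0 <= QQ R G by move=> G; rewrite /QQ addr_ge0 // sqr_ge0.
have PgtQ : QQ R F < PP R F.
  by rewrite -subr_gt0 PQ mulr_gt0 // ltr0n.
have QF0 : QQ R F = 0.
  move: fmax fmin; rewrite hmax hmin.
  have := sqr_sqrtr (P0 F); have := sqr_sqrtr (Q0 F).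
  have := sqrtr_ge0 (PP R F); have := sqrtr_ge0 (QQ R F).
  set p := Num.sqrt (PP R F); set q := Num.sqrt (QQ R F).
  move=> q0 p0 qq pp.
  have pq : q < p by nra.
  rewrite ger0_norm; last by lra.
  move=> E1 E2.
  have q00 : q = 0 by lra.
  by rewrite -qq q00 expr0n.
have [E1 E2] : F 0 0 = F 1 1 /\ F 0 1 = - F 1 0.
  move: QF0; rewrite /QQ => QF0.
  have s1 := sqr_ge0 (F 0 0 - F 1 1); have s2 := sqr_ge0 (F 0 1 + F 1 0).
  have z1 : (F 0 0 - F 1 1) ^+ 2 = 0 by lra.
  have z2 : (F 0 1 + F 1 0) ^+ 2 = 0 by lra.
  move/eqP: z1; rewrite sqrf_eq0 => /eqP z1.
  move/eqP: z2; rewrite sqrf_eq0 => /eqP z2.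
  split; lra.
pose a := (H 0 0 + H 1 1) ^+ 2 + (H 1 0 - H 0 1) ^+ 2.
pose b := 2 * ((F 0 0 + F 1 1) * (H 0 0 + H 1 1) + (F 1 0 - F 0 1) * (H 1 0 - H 0 1)).
pose c0 := (F 0 0 + F 1 1) ^+ 2 + (F 1 0 - F 0 1) ^+ 2.
pose K := (H 0 0 - H 1 1) ^+ 2 + (H 0 1 + H 1 0) ^+ 2.
have EP : forall s, PP R (F + s *: H) = Pf R a b c0 s.
  by move=> s; rewrite /PP /Pf /a /b /c0 !mxE; ring.
have EQ : forall s, Num.sqrt (QQ R (F + s *: H)) = `|s| * Num.sqrt K.
  move=> s; have -> : QQ R (F + s *: H) = s ^+ 2 * K.
    by rewrite /QQ /K !mxE E1 E2; ring.
  by rewrite sqrtrM ?sqr_ge0 // sqrtr_sqr.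
have c0pos : 0 < c0.
  have -> : c0 = PP R F by rewrite /c0 /PP.
  by apply: le_lt_trans PgtQ.
apply: (@abstract_main R a b c0 (Num.sqrt K) lmax lmin c0pos (sqrtr_ge0 K)).
- by move=> s; rewrite -EP.
- by move=> s; rewrite /lmax (proj1 (@sv_formula R _)) EP EQ.
- by move=> s; rewrite /lmin (proj2 (@sv_formula R _)) EP EQ.
Qed.
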